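(* Let $\kappa$ be an uncountable regular cardinal and let $\mathcal{I}$ be a $\kappa$-complete proper ideal on $\kappa$ containing every bounded subset of $\kappa$, and suppose $\mathcal{I}$ contains an unbounded subset of $\kappa$. Let $\nu\in\{2,\kappa\}$. Then: (1) every nonempty $A\subseteq{}^{\kappa}\nu$ is an $\mathcal{I}$-continuous image of ${}^{\kappa}\kappa$; (2) every $A\subseteq{}^{\kappa}\nu$ is an injective $\mathcal{I}$-continuous image of some $\mathcal{I}$-closed set $C\subseteq{}^{\kappa}\kappa$, i.e. there is an $\mathcal{I}$-continuous function $\Phi$ defined on $C$ (with the subspace topology) that is injective and satisfies $\Phi(C)=A$.
   Context: For $\mu\in\{2,\kappa\}$, ${}^{\kappa}\mu$ is the set of functions $\kappa\to\mu$ with the topology $\tau_{\mathcal{I}}$ generated by the sets $\mathbf{N}_f=\{x:f\subseteq x\}$ for $f\colon D\to\mu$, $D\in\mathcal{I}$. $\mathcal{I}$-continuous means continuous with respect to these topologies; $\mathcal{I}$-closed means $\tau_{\mathcal{I}}$-closed. In (1), $A$ being an $\mathcal{I}$-continuous image of ${}^{\kappa}\kappa$ means there is an $\mathcal{I}$-continuous surjection ${}^{\kappa}\kappa\to A$. *)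

(* Defs.v *)
(* The cardinal kappa is represented by a type K carrying a strict well-order
   lt; elements of K are the ordinals below kappa. Subsets of K are K -> Prop. *)

Section Defs.
Context {K : Type} (lt : K -> K -> Prop).

Definition strict_wellorder : Prop :=
  (forall a, ~ lt a a) /\
  (forall a b c, lt a b -> lt b c -> lt a c) /\
  (forall a b, lt a b \/ a = b \/ lt b a) /\
  well_founded lt.

Definition card_lt_kappa (J : Type) : Prop :=
  exists (alpha : K) (f : J -> K),
    (forall i j, f i = f j -> i = j) /\ (forall j, lt (f j) alpha).

Definition bounded (X : K -> Prop) : Prop :=
  exists beta : K, forall x, X x -> lt x beta.

Definition uncountable_regular_cardinal : Prop :=
  strict_wellorder /\
  (* kappa is a cardinal: not of size < kappa *)
  ~ card_lt_kappa K /\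
  ~ (exists f : K -> nat, forall a b, f a = f b -> a = b) /\
  (forall X : K -> Prop, card_lt_kappa {x : K | X x} -> bounded X).

Definition kappa_complete_proper_ideal (I : (K -> Prop) -> Prop) : Prop :=
  (forall A B : K -> Prop, I B -> (forall x, A x -> B x) -> I A) /\
  (forall A B : K -> Prop, I A -> I B -> I (fun x => A x \/ B x)) /\
  (forall (J : Type) (F : J -> K -> Prop),
      card_lt_kappa J -> (forall j, I (F j)) -> I (fun x => exists j, F j x)) /\
  ~ I (fun _ => True).

End Defs.

(* codomain of the space ^kappa nu : nu = true means 2 (bool), nu = false means kappa *)
Definition nu_type (K : Type) (nu : bool) : Type := if nu then bool else K.

Section Topology.
Context {K : Type} (I : (K -> Prop) -> Prop).

(* open in tau_I: union of basic sets N_f = {x | f ⊆ x}, dom f ∈ I *)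
Definition I_open {M : Type} (U : (K -> M) -> Prop) : Prop :=
  forall x, U x -> exists D : K -> Prop, I D /\
    forall y : K -> M, (forall d, D d -> y d = x d) -> U y.

Definition I_closed {M : Type} (C : (K -> M) -> Prop) : Prop :=
  I_open (fun x => ~ C x).

(* Phi restricted to C (subspace topology) is continuous into (K -> N, tau_I) *)
Definition I_continuous_on {M N : Type} (C : (K -> M) -> Prop)
    (Phi : (K -> M) -> (K -> N)) : Prop :=
  forall V : (K -> N) -> Prop, I_open V ->
    exists U : (K -> M) -> Prop, I_open U /\
      forall x, C x -> (V (Phi x) <-> U x).
End Topology.

(* Main.v *)
Require Import Defs.
From Stdlib Require Import Classical ClassicalEpsilon FunctionalExtensionality.

Section Main.
Variables (K : Type) (lt : K -> K -> Prop) (I : (K -> Prop) -> Prop).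
Hypothesis wo : strict_wellorder lt.
Hypothesis reg : forall X : K -> Prop, card_lt_kappa lt {x : K | X x} -> bounded lt X.
Hypothesis Ibnd : forall X : K -> Prop, bounded lt X -> I X.
Variable X : K -> Prop.
Hypothesis IX : I X.
Hypothesis Xunb : ~ bounded lt X.
Variables k0 k1 : K.
Hypothesis k01 : lt k0 k1.

Let irr : forall a, ~ lt a a := proj1 wo.
Let trans : forall a b c, lt a b -> lt b c -> lt a c := proj1 (proj2 wo).
Let tri : forall a b, lt a b \/ a = b \/ lt b a := proj1 (proj2 (proj2 wo)).
Let wf : well_founded lt := proj2 (proj2 (proj2 wo)).

Definition Fg (a : K) (rec : forall b, lt b a -> K) : K :=
  epsilon (inhabits k0) (fun x => X x /\ forall b (h : lt b a), lt (rec b h) x).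

Definition g : K -> K := Fix wf (fun _ => K) Fg.

Lemma g_eq a : g a = epsilon (inhabits k0) (fun x => X x /\ forall b, lt b a -> lt (g b) x).
Proof.
  unfold g at 1. rewrite Fix_eq. reflexivity.
  intros x f f' Hf. unfold Fg.
  assert (E : f = f').
  { apply functional_extensionality_dep; intro y.
    apply functional_extensionality_dep; intro p. apply Hf. }
  rewrite E. reflexivity.
Qed.

Lemma g_spec a : X (g a) /\ forall b, lt b a -> lt (g b) (g a).
Proof.
  rewrite (g_eq a). apply epsilon_spec.
  set (S := fun y => exists b, lt b a /\ g b = y).
  assert (HS : bounded lt S).
  { apply reg. exists a.
    exists (fun y : {y | S y} => proj1_sig (constructive_indefinite_description _ (proj2_sig y))).
    split.
    - intros [y1 p1] [y2 p2]; simpl.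
      pose proof (proj2_sig (constructive_indefinite_description _ p1)) as [_ e1].
      pose proof (proj2_sig (constructive_indefinite_description _ p2)) as [_ e2].
      simpl in *. intro E. rewrite E in e1. assert (y1 = y2) by congruence. subst y2.
      f_equal. apply proof_irrelevance.
    - intros [y p]; simpl.
      exact (proj1 (proj2_sig (constructive_indefinite_description _ p))). }
  destruct HS as [beta Hbeta].
  destruct (classic (exists x, X x /\ ~ lt x beta)) as [[x [Xx nx]] | N].
  - exists x. split; auto. intros b hb.
    assert (lt (g b) beta) by (apply Hbeta; exists b; auto).
    destruct (tri x beta) as [h | [h | h]].
    + contradiction.
    + subst; auto.
    + eauto.
  - exfalso. apply Xunb. exists beta. intros x Xx.
    apply NNPP. intro n. apply N. eauto.
Qed.

Lemma g_inj a b : g a = g b -> a = b.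
Proof.
  intro E. destruct (tri a b) as [h | [h | h]]; auto.
  - apply (proj2 (g_spec b)) in h. rewrite E in h. exfalso; eapply irr; eauto.
  - apply (proj2 (g_spec a)) in h. rewrite E in h. exfalso; eapply irr; eauto.
Qed.

Definition ginv (j : K) : K := epsilon (inhabits k0) (fun k => g k = j).

Lemma ginv_g k : ginv (g k) = k.
Proof.
  unfold ginv. apply g_inj. apply (epsilon_spec (inhabits k0) (fun k' => g k' = g k)).
  exists k; auto.
Qed.

Definition code (nu : bool) : nu_type K nu -> K :=
  match nu as n return nu_type K n -> K with
  | true => fun b => if b then k1 else k0
  | false => fun k => k
  end.

Lemma code_inj nu v w : code nu v = code nu w -> v = w.
Proof.
  destruct nu; simpl in *; auto.
  destruct v, w; auto; intro E; exfalso; rewrite E in k01; eapply irr; eauto.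
Qed.

Definition inh nu : inhabited (nu_type K nu) :=
  match nu as n return inhabited (nu_type K n) with
  | true => inhabits true
  | false => inhabits k0
  end.

Definition decode nu (k : K) : nu_type K nu := epsilon (inh nu) (fun v => code nu v = k).

Lemma decode_code nu v : decode nu (code nu v) = v.
Proof.
  unfold decode. apply code_inj.
  apply (epsilon_spec (inh nu) (fun v' => code nu v' = code nu v)). eauto.
Qed.

Definition H nu (x : K -> K) : K -> nu_type K nu := fun k => decode nu (x (g k)).

Lemma H_loc nu x y : (forall d, X d -> y d = x d) -> H nu y = H nu x.
Proof.
  intro E. apply functional_extensionality; intro k. unfold H.
  rewrite E; auto. apply g_spec.
Qed.

Lemma cont_of {M N} (C : (K -> M) -> Prop) (Phi : (K -> M) -> (K -> N)) :
  (forall x y, (forall d, X d -> y d = x d) -> Phi y = Phi x) -> I_continuous_on I C Phi.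
Proof.
  intros HP V _. exists (fun x => V (Phi x)). split.
  - intros x Vx. exists X; split; auto. intros y Hy. rewrite (HP x y Hy). auto.
  - intros; tauto.
Qed.

Definition pre nu (w : K -> nu_type K nu) : K -> K := fun j => code nu (w (ginv j)).

Lemma H_pre nu w : H nu (pre nu w) = w.
Proof.
  apply functional_extensionality; intro k. unfold H, pre.
  rewrite ginv_g. apply decode_code.
Qed.

Definition preC nu (w : K -> nu_type K nu) : K -> K := fun j =>
  if excluded_middle_informative (exists k, g k = j) then code nu (w (ginv j)) else k0.

Lemma H_preC nu w : H nu (preC nu w) = w.
Proof.
  apply functional_extensionality; intro k. unfold H, preC.
  destruct (excluded_middle_informative (exists k', g k' = g k)) as [_ | n].
  - rewrite ginv_g. apply decode_code.
  - exfalso; eauto.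
Qed.

Lemma single_I j : I (fun d => d = j).
Proof.
  apply Ibnd, reg. exists k1, (fun _ => k0). split; auto.
  intros [a pa] [b pb] _. subst. reflexivity.
Qed.

Lemma part1 nu : forall A : (K -> nu_type K nu) -> Prop, (exists a, A a) ->
       exists Phi : (K -> K) -> (K -> nu_type K nu),
         I_continuous_on I (fun _ => True) Phi /\
         (forall y, A y <-> exists x, Phi x = y).
Proof.
  intros A [a0 Aa0].
  exists (fun x => if excluded_middle_informative (A (H nu x)) then H nu x else a0).
  split.
  - apply cont_of. intros x y E. rewrite (H_loc nu x y E). reflexivity.
  - intro y. split.
    + intro Ay. exists (pre nu y). rewrite H_pre.
      destruct (excluded_middle_informative (A y)); tauto.
    + intros [x <-]. destruct (excluded_middle_informative (A (H nu x))); auto.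
Qed.

Lemma part2 nu : forall A : (K -> nu_type K nu) -> Prop,
       exists C : (K -> K) -> Prop, I_closed I C /\
       exists Phi : (K -> K) -> (K -> nu_type K nu),
         I_continuous_on I C Phi /\
         (forall x1 x2, C x1 -> C x2 -> Phi x1 = Phi x2 -> x1 = x2) /\
         (forall y, A y <-> exists x, C x /\ Phi x = y).
Proof.
  intro A. exists (fun x => exists w, A w /\ x = preC nu w). split.
  - intros x nC.
    destruct (classic (exists j, ~ (exists k, g k = j) /\ x j <> k0)) as [[j [nj xj]] | N].
    + exists (fun d => d = j). split; [apply single_I|].
      intros y Hy [w [_ ->]]. apply xj. rewrite <- Hy by reflexivity.
      unfold preC. destruct (excluded_middle_informative (exists k, g k = j)); tauto.
    + exists X. split; auto. intros y Hy [w [Aw ->]]. apply nC. exists w. split; auto.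
      apply functional_extensionality; intro j.
      destruct (classic (exists k, g k = j)) as [[k <-] | nj].
      * symmetry. apply Hy. apply g_spec.
      * unfold preC. destruct (excluded_middle_informative (exists k, g k = j)); [tauto|].
        apply NNPP. intro ne. apply N. eauto.
  - exists (H nu). split; [apply cont_of; intros; apply H_loc; auto|]. split.
    + intros x1 x2 [w1 [_ ->]] [w2 [_ ->]]. rewrite !H_preC. intros ->. reflexivity.
    + intro y. split.
      * intro Ay. exists (preC nu y). split; [eauto | apply H_preC].
      * intros [x [[w [Aw ->]] <-]]. rewrite H_preC. auto.
Qed.

End Main.

Theorem proposition5p5 (K : Type) (lt : K -> K -> Prop) (I : (K -> Prop) -> Prop) :
  uncountable_regular_cardinal lt ->
  kappa_complete_proper_ideal lt I ->
  (forall X : K -> Prop, bounded lt X -> I X) ->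
  (exists X : K -> Prop, I X /\ ~ bounded lt X) ->
  forall nu : bool,
    (forall A : (K -> nu_type K nu) -> Prop, (exists a, A a) ->
       exists Phi : (K -> K) -> (K -> nu_type K nu),
         I_continuous_on I (fun _ => True) Phi /\
         (forall y, A y <-> exists x, Phi x = y)) /\
    (forall A : (K -> nu_type K nu) -> Prop,
       exists C : (K -> K) -> Prop, I_closed I C /\
       exists Phi : (K -> K) -> (K -> nu_type K nu),
         I_continuous_on I C Phi /\
         (forall x1 x2, C x1 -> C x2 -> Phi x1 = Phi x2 -> x1 = x2) /\
         (forall y, A y <-> exists x, C x /\ Phi x = y)).
Proof.
  intros [wo [_ [unc reg]]] _ Ibnd [X [IX Xunb]] nu.
  assert (D : exists a b : K, a <> b).
  { apply NNPP. intro N. apply unc. exists (fun _ => 0). intros a b _.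
    apply NNPP. intro ne. apply N. eauto. }
  assert (L : exists a b : K, lt a b).
  { destruct D as [a [b ne]].
    destruct (proj1 (proj2 (proj2 wo)) a b) as [h | [h | h]]; eauto; contradiction. }
  destruct L as [k0 [k1 k01]].
  split.
  - exact (part1 K lt I wo reg X IX Xunb k0 k1 k01 nu).
  - exact (part2 K lt I wo reg Ibnd X IX Xunb k0 k1 k01 nu).
Qed.
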